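(* For all integers $m\ge1$, $n,h,r\ge0$ and $0\le s\le n+h$, $$W_{m,r}(n+h,s)=\sum_{k=0}^n\sum_{j=0}^h\binom nk W_{m,r}(h,j)\,W_{m,r}(k,s-j)\,(jm)^{n-k},$$ with the conventions $0^0=1$ and $W_{m,r}(k,i)=0$ if $i<0$ or $i>k$.
   Context: For integers $m\ge1$, $n,k,r\ge0$, $W_{m,r}(n,k)$ denotes the $r$-Whitney number of the second kind, defined by $\sum_{n\ge k}W_{m,r}(n,k)\frac{z^n}{n!}=\frac{e^{rz}}{k!}\left(\frac{e^{mz}-1}{m}\right)^k$ (equivalently $(mx+r)^n=\sum_{k=0}^n m^kW_{m,r}(n,k)\,x(x-1)\cdots(x-k+1)$). *)

(* Defs.v *)
From mathcomp Require Import all_boot all_order all_algebra.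
Set Implicit Arguments. Unset Strict Implicit. Unset Printing Implicit Defensive.
Import GRing.Theory Num.Theory.
Local Open Scope ring_scope.

(* Coefficient extraction from the EGF
     e^{rz}/k! ((e^{mz}-1)/m)^k
       = 1/(m^k k!) * sum_{i=0}^k C(k,i) (-1)^(k-i) e^{(mi+r) z},
   so the coefficient of z^n/n! is
     1/(m^k k!) * sum_{i=0}^k (-1)^(k-i) C(k,i) (m i + r)^n.
   (This vanishes automatically for k > n.) *)
Definition W (m r n k : nat) : rat :=
  (\sum_(i < k.+1) (-1) ^+ (k - i) * ('C(k, i))%:R * ((m * i + r)%N%:R) ^+ n)
  / ((m ^ k)%N%:R * (k`!)%:R).

Definition Wz (m r n : nat) (i : int) : rat :=
  match i with
  | Posz k => if (k <= n)%N then W m r n k else 0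
  | Negz _ => 0
  end.

(* Main.v *)
Require Import Defs.
From mathcomp Require Import all_boot all_order all_algebra zify ring.
Import GRing.Theory Num.Theory.
Local Open Scope ring_scope.

Definition D (k : nat) (f : nat -> rat) (x : nat) : rat :=
  \sum_(i < k.+1) (-1) ^+ (k + i) * ('C(k, i))%:R * f (x + i)%N.

Lemma D_ext k f g x : (forall y, f y = g y) -> D k f x = D k g x.
Proof. by move=> H; apply: eq_bigr => i _; rewrite H. Qed.

Lemma D_add k f g x : D k (fun y => f y + g y) x = D k f x + D k g x.
Proof. by rewrite /D -big_split; apply: eq_bigr => i _ /=; rewrite mulrDr. Qed.

Lemma D_opp k f x : D k (fun y => - f y) x = - D k f x.
Proof. by rewrite /D -sumrN; apply: eq_bigr => i _ /=; rewrite mulrN. Qed.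

Lemma D_scale k c f x : D k (fun y => c * f y) x = c * D k f x.
Proof. by rewrite /D mulr_sumr; apply: eq_bigr => i _ /=; rewrite mulrCA. Qed.

Lemma D_sum k N (F : nat -> nat -> rat) x :
  D k (fun y => \sum_(t < N) F t y) x = \sum_(t < N) D k (F t) x.
Proof.
rewrite /D exchange_big /=; apply: eq_bigr => i _; rewrite mulr_sumr //.
Qed.

Lemma D_shift k f x : D k f x = D k (fun y => f (x + y)%N) 0.
Proof. by apply: eq_bigr => i _; rewrite add0n. Qed.

Lemma D_succ k f x : D k.+1 f x = D k f x.+1 - D k f x.
Proof.
rewrite /D big_ord_recl /=.
under eq_bigr => i _ do rewrite /bump /= add1n binS natrD mulrDr mulrDl.
rewrite big_split /= addrA addrC; congr (_ + _).
  by apply: eq_bigr => i _; rewrite addSn addnS !exprS mulN1r mulN1r opprK addSnnS.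
rewrite [in RHS]big_ord_recl big_ord_recr /= (bin_small (ltnSn k)) mulr0 mul0r addr0.
rewrite opprD; congr (_ + _).
  by rewrite !addn0 !bin0 exprS mulN1r !mulNr.
rewrite -sumrN; apply: eq_bigr => i _ /=; rewrite /bump /= add1n !addnS !addSn !exprS.
by rewrite !mulN1r !mulNr !opprK.
Qed.

Lemma D_delta k f x : D k.+1 f x = D k (fun y => f y.+1 - f y) x.
Proof.
rewrite D_succ (D_add k (fun y => f y.+1) (fun y => - f y)) D_opp; congr (_ - _).
Qed.

Lemma D_leibniz s : forall f g x,
  D s (fun y => f y * g y) x =
  \sum_(j < s.+1) ('C(s, j))%:R * D j f x * D (s - j) g (x + j)%N.
Proof.
elim: s => [|s IH] f g x.
  by rewrite /D !big_ord1 /= !addn0 !bin0 !expr0 !mul1r.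
rewrite D_delta.
rewrite (D_ext _ _ (fun y => (f y.+1 - f y) * g y.+1 + f y * (g y.+1 - g y))); last first.
  by move=> y; rewrite mulrBl mulrBr addrA subrK.
rewrite D_add (IH (fun y => f y.+1 - f y) (fun y => g y.+1)) IH.
have Sh : forall k h z, D k (fun y => h y.+1) z = D k h z.+1.
  by move=> k h z; apply: eq_bigr => i _; rewrite addSn.
under eq_bigr => j _ do rewrite -D_delta Sh.
under [X in _ + X = _]eq_bigr => j _ do rewrite -D_delta.
rewrite [RHS]big_ord_recl /=.
under [X in _ = _ + X]eq_bigr => j _ do rewrite /bump /= add1n binS natrD !mulrDl.
rewrite big_split /= addrA [RHS]addrC; congr (_ + _).
  by apply: eq_bigr => j _; rewrite subSS addnS.
rewrite big_ord_recl big_ord_recr /= (bin_small (ltnSn s)) mul0r mul0r addr0.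
congr (_ + _).
  by rewrite !bin0 !subn0.
apply: eq_bigr => j _; rewrite /bump /= add1n -subSn //.
Qed.

Definition p (m r n : nat) (y : nat) : rat := ((m * y + r)%N%:R) ^+ n.

Lemma D_vanish m r k : forall n x, (n < k)%N -> D k (p m r n) x = 0.
Proof.
elim: k => [|k IH] n x H //.
rewrite D_delta (D_ext _ _
  (fun y => \sum_(i < n) (('C(n, i.+1))%:R * (m%:R) ^+ i.+1) * p m r (n - i.+1) y)).
  rewrite (D_sum k n (fun i y => (('C(n, i.+1))%:R * (m%:R) ^+ i.+1) * p m r (n - i.+1) y)).
  rewrite big1 // => i _; rewrite D_scale IH ?mulr0 //.
  by move: H (ltn_ord i); clear; lia.
move=> y; rewrite /p mulnS -addnA addnC natrD exprDn big_ord_recl subn0 expr0 mulr1 bin0 mulr1n.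
rewrite addrAC subrr add0r; apply: eq_bigr => i _.
by rewrite lift0 -mulr_natr mulrC mulrA mulrAC.
Qed.

Lemma sign_eq (k i : nat) : (i <= k)%N -> (-1) ^+ (k - i) = (-1) ^+ (k + i) :> rat.
Proof.
move=> H; rewrite -{2}(subnK H) -addnA addnn -mul2n exprD exprM sqrrN !expr1n mulr1 //.
Qed.

Lemma W_D m r n k : W m r n k = D k (p m r n) 0 / ((m ^ k)%N%:R * (k`!)%:R).
Proof.
rewrite /W /D; congr (_ / _); apply: eq_bigr => i _.
by rewrite add0n /p sign_eq // -ltnS.
Qed.

Lemma W_vanish m r n k : (n < k)%N -> W m r n k = 0.
Proof. by move=> H; rewrite W_D D_vanish // mul0r. Qed.

Lemma Wz_pos m r n t : Wz m r n (Posz t) = W m r n t.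
Proof. by rewrite /=; case: leqP => // H; rewrite W_vanish. Qed.

Lemma D_expand m r n t x :
  D t (p m r n) x = \sum_(k < n.+1) ('C(n, k))%:R * ((x * m)%N%:R) ^+ (n - k) * D t (p m r k) 0.
Proof.
rewrite D_shift (D_ext _ _ (fun y => \sum_(k < n.+1)
   (('C(n, k))%:R * ((x * m)%N%:R) ^+ (n - k)) * p m r k y)).
  rewrite (D_sum t n.+1 (fun k y => (('C(n, k))%:R * ((x * m)%N%:R) ^+ (n - k)) * p m r k y)).
  by apply: eq_bigr => k _; rewrite D_scale.
move=> y; rewrite /p mulnDr -addnA natrD exprDn; apply: eq_bigr => k _.
by rewrite -mulr_natl mulnC mulrA.
Qed.

Lemma widen_sum (a N : nat) (F : nat -> rat) : (a <= N)%N ->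
  \sum_(j < a) F j = \sum_(j < N) (if (j < a)%N then F j else 0).
Proof. by move=> H; rewrite (big_ord_widen _ _ H) big_mkcond. Qed.

Theorem mainTheorem6 (m n h r s : nat) (hm : (1 <= m)%N) (hs : (s <= n + h)%N) :
  W m r (n + h) s =
  \sum_(k < n.+1) \sum_(j < h.+1)
    ('C(n, k))%:R * W m r h j * Wz m r k (s%:Z - j%:Z)
      * ((j * m)%N%:R) ^+ (n - k).
Proof.
set T := fun (j k : nat) => ('C(n, k))%:R * W m r h j * Wz m r k (s%:Z - j%:Z)
      * ((j * m)%N%:R) ^+ (n - k).
rewrite exchange_big /=.
rewrite W_D (D_ext _ _ (fun y => p m r h y * p m r n y)); last first.
  by move=> y; rewrite /p exprD mulrC.
rewrite D_leibniz mulr_suml.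
rewrite (@widen_sum s.+1 (s + h).+1 (fun j => 'C(s, j)%:R * D j (p m r h) 0 * D (s - j) (p m r n) (0 + j)
   / ((m ^ s)%N%:R * (s`!)%:R))); last by rewrite ltnS leq_addr.
rewrite (@widen_sum h.+1 (s + h).+1 (fun j => \sum_(k < n.+1) T j k)); last by rewrite ltnS leq_addl.
apply: eq_bigr => j _.
have HC : (s < j)%N -> \sum_(k < n.+1) T j k = 0.
  move=> Hj; rewrite big1 // => k _; rewrite /T.
  have -> : Wz m r k (s%:Z - j%:Z) = 0.
    case E: (s%:Z - j%:Z) => [t|t] //.
    have : (0 <= s%:Z - j%:Z)%R by rewrite E.
    by rewrite subr_ge0 lez_nat leqNgt Hj.
  by rewrite mulr0 mul0r.
have HB : (h < j)%N -> \sum_(k < n.+1) T j k = 0.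
  move=> Hj; rewrite big1 // => k _; by rewrite /T W_vanish // mulr0 !mul0r.
case: ltnP => Hs; case: ltnP => Hh //; last by rewrite HC.
- have Hjs : (j <= s)%N by rewrite -ltnS.
  rewrite add0n (D_expand m r n (s - j) j) mulr_sumr mulr_suml; apply: eq_bigr => k _.
  rewrite /T (subzn Hjs) Wz_pos !W_D.
  have Ec : (m ^ s)%N%:R * (s`!)%:R = 'C(s, j)%:R * ((m ^ j)%N%:R * (j`!)%:R)
     * ((m ^ (s - j))%N%:R * ((s - j)`!)%:R) :> rat.
    rewrite -!natrM; congr (_%:R).
    rewrite -{1}(bin_fact Hjs) -{1}(subnKC Hjs) expnD.
    ring.
  have m0 : forall t, (m ^ t)%N%:R != 0 :> rat.
    by move=> t; rewrite pnatr_eq0 -lt0n expn_gt0 hm.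
  have f0 : forall t, (t`!)%:R != 0 :> rat.
    by move=> t; rewrite pnatr_eq0 -lt0n fact_gt0.
  have b0 : 'C(s, j)%:R != 0 :> rat.
    by rewrite pnatr_eq0 -lt0n bin_gt0.
  rewrite Ec.
  field.
  by rewrite !f0 !m0 b0.
- by rewrite D_vanish // mulr0 !mul0r.
Qed.
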